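(* Let $q$ be a prime power with $q\equiv 1 \pmod 3$, let $\delta\in\mathbb{F}_q$ be a cubic nonresidue, and let $\mathbb{F}_q(\delta^{1/3})$ be the cubic extension with $\mathbb{F}_q$-basis $\{1,\delta^{1/3},\delta^{2/3}\}$; write $\alpha=\alpha_1+\alpha_2\delta^{1/3}+\alpha_3\delta^{2/3}$ with $\alpha_i\in\mathbb{F}_q$. Let $\mathbb{H}_q=\{(\alpha,\beta)\in \mathbb{F}_q(\delta^{1/3})^2 : \alpha_2\beta_3-\alpha_3\beta_2\neq 0\}$ with the action of $\mathrm{GL}_3(\mathbb{F}_q)$ given by \[ \begin{bmatrix} a & b & c\\ d & e & f\\ r & s & t \end{bmatrix} (\alpha,\beta) = \left(\frac{a\alpha+b\beta+c}{r\alpha+s\beta+t}, \frac{d\alpha+e\beta+f}{r\alpha+s\beta+t} \right). \] Let \[H=\left\{\begin{bmatrix} d & y & x\\ 0 & c & b\\ 0 & 0 & d\end{bmatrix} : c,d\in\mathbb{F}_q^\times,\ b,x,y\in\mathbb{F}_q\right\}\] (the centralizer in $\mathrm{GL}_3(\mathbb{F}_q)$ of $\begin{bmatrix} a&0&a\\0&a&0\\0&0&a\end{bmatrix}$, $a\neq 0$). Then \[\{(u\delta^{1/3},\,v\delta^{1/3}+\delta^{2/3}) : u,v\in\mathbb{F}_q,\ u\neq 0\}\ \sqcup\ \{(\delta^{1/3}+u\delta^{2/3},\,\delta^{1/3}) : u\in\mathbb{F}_q^\times\}\] is a fundamental domain for the action of $H$ on $\mathbb{H}_q$.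
   Context: A fundamental domain for the action of a subgroup $H$ on $\mathbb{H}_q$ is a subset of $\mathbb{H}_q$ containing exactly one element of each $H$-orbit. A cubic nonresidue is an element of $\mathbb{F}_q^\times$ that is not a cube in $\mathbb{F}_q$. *)

(* Defs.v *)
From HB Require Import structures.
From mathcomp Require Import all_boot all_order all_algebra all_field.
Set Implicit Arguments. Unset Strict Implicit. Unset Printing Implicit Defensive.
Import GRing.Theory.
Local Open Scope ring_scope.

Section Defs.
Variables (F : finFieldType) (L : fieldExtType F) (w : L).

Definition i0 : 'I_3 := @Ordinal 3 0 isT.
Definition i1 : 'I_3 := @Ordinal 3 1 isT.
Definition i2 : 'I_3 := @Ordinal 3 2 isT.

Definition cubic_nonresidue (delta : F) : Prop :=
  delta != 0 /\ ~ (exists x : F, x ^+ 3 = delta).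

(* the F-basis {1, w, w^2} of F(delta^{1/3}) (w = delta^{1/3}) *)
Definition cbasis : 3.-tuple L := [tuple 1; w; w ^+ 2].

(* coordinates alpha_1, alpha_2, alpha_3 of alpha in this basis *)
Definition cco (i : 'I_3) (x : L) : F := coord cbasis i x.

Definition Hq (p : L * L) : Prop :=
  cco i1 p.1 * cco i2 p.2 - cco i2 p.1 * cco i1 p.2 != 0.

Definition gact (A : 'M[F]_3) (p : L * L) : L * L :=
  let den := A i2 i0 *: p.1 + A i2 i1 *: p.2 + (A i2 i2)%:A in
  ((A i0 i0 *: p.1 + A i0 i1 *: p.2 + (A i0 i2)%:A) / den,
   (A i1 i0 *: p.1 + A i1 i1 *: p.2 + (A i1 i2)%:A) / den).

Definition Hgrp (A : 'M[F]_3) : Prop :=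
  (A i0 i0 != 0) /\ (A i1 i1 != 0) /\ (A i2 i2 = A i0 i0) /\
  (A i1 i0 = 0) /\ (A i2 i0 = 0) /\ (A i2 i1 = 0).

Definition D1 (p : L * L) : Prop :=
  exists u v : F, u != 0 /\ p = (u *: w, v *: w + w ^+ 2).
Definition D2 (p : L * L) : Prop :=
  exists u : F, u != 0 /\ p = (w + u *: w ^+ 2, w).

Definition fundamental_domain (G : 'M[F]_3 -> Prop) (X D : L * L -> Prop) : Prop :=
  (forall p, D p -> X p) /\
  (forall p, X p -> exists d, (D d /\ exists g, G g /\ gact g p = d) /\
       forall d', D d' -> (exists g, G g /\ gact g p = d') -> d' = d).
End Defs.

(* Main.v *)
Require Import Defs.
From HB Require Import structures.
From mathcomp Require Import all_boot all_order all_algebra all_field.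
From mathcomp Require Import ring.
Set Implicit Arguments. Unset Strict Implicit.
Import GRing.Theory.
Local Open Scope ring_scope.

Lemma cbasis_free (F : finFieldType) (L : fieldExtType F) (delta : F) (w : L) :
  cubic_nonresidue delta -> w ^+ 3 = delta%:A -> free (cbasis w).
Proof.
move=> [d0 ncube] w3; apply/freeP => k ks i.
pose P : {poly F} := \poly_(j < 3) k (inord j).
pose q : {poly F} := 'X^3 - delta%:P.
have szq : size q = 4%N by rewrite size_XnsubC.
have irr : irreducible_poly q.
  apply: cubic_irreducible; first by rewrite szq.
  move=> x; rewrite /root !hornerE subr_eq0; apply/negP => /eqP h.
  by apply: ncube; exists x.
have P0 : P = 0.
  apply/eqP; apply/negPn/negP => nzP.
  have cop : coprimep q P.
    rewrite irreducible_poly_coprime //; apply/negP => /(dvdp_leq nzP).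
    by rewrite szq leqNgt (leq_ltn_trans (size_poly _ _)).
  rewrite -(coprimep_map (in_alg L)) in cop.
  have rq : root (map_poly (in_alg L) q) w.
    by rewrite /root /q rmorphB /= map_polyXn map_polyC /= !hornerE w3 subrr.
  have := coprimep_root cop rq.
  move/eqP; apply; transitivity (\sum_(i < 3) k i *: (cbasis w)`_i); last exact: ks.
  rewrite /P. rewrite poly_def. rewrite rmorph_sum. rewrite horner_sum. rewrite !big_ord_recr !big_ord0 /=.
  rewrite !map_polyZ !map_polyXn !hornerZ !hornerXn !mulr_algl ?add0r.
  have E : forall n (h : (n < 3)%N), k (inord n) = k (Ordinal h).
    by move=> n h; congr k; apply/val_inj; rewrite /= inordK.
  rewrite (E 0%N isT) (E 1%N isT) (E 2%N isT).
  rewrite expr0 expr1 /=.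
  by congr (_%:A + _ *: _ + _ *: _); congr k; exact/val_inj.
have := congr1 (fun p : {poly F} => p`_i) P0.
by rewrite coef_poly coef0 ltn_ord inord_val.
Qed.

Lemma cbasis_basis (F : finFieldType) (L : fieldExtType F) (w : L) :
  free (cbasis w) -> (\dim {:L} = 3)%N -> basis_of fullv (cbasis w).
Proof. by move=> fr d; rewrite basisEfree fr subvf d size_tuple. Qed.


Lemma ccoD (F : finFieldType) (L : fieldExtType F) (w : L) i x y :
  cco w i (x + y) = cco w i x + cco w i y.
Proof. by rewrite /cco linearD. Qed.
Lemma ccoZ (F : finFieldType) (L : fieldExtType F) (w : L) i a x :
  cco w i (a *: x) = a * cco w i x.
Proof. by rewrite /cco linearZ. Qed.
Lemma ccoA (F : finFieldType) (L : fieldExtType F) (w : L) i a :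
  cco w i (a%:A) = a * cco w i 1.
Proof. by rewrite ccoZ. Qed.

Lemma cco_tab (F : finFieldType) (L : fieldExtType F) (w : L) :
  free (cbasis w) ->
  (cco w i0 1 = 1 /\ cco w i1 1 = 0 /\ cco w i2 1 = 0) /\
  (cco w i0 w = 0 /\ cco w i1 w = 1 /\ cco w i2 w = 0) /\
  (cco w i0 (w^+2) = 0 /\ cco w i1 (w^+2) = 0 /\ cco w i2 (w^+2) = 1).
Proof.
move=> fr.
have c := fun i j => coord_free i j fr.
by do !split; [exact: (c i0 i0)|exact: (c i0 i1)|exact: (c i0 i2)|exact: (c i1 i0)
  |exact: (c i1 i1)|exact: (c i1 i2)|exact: (c i2 i0)|exact: (c i2 i1)|exact: (c i2 i2)].
Qed.

Lemma cco_eq (F : finFieldType) (L : fieldExtType F) (w : L) x y :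
  basis_of fullv (cbasis w) ->
  cco w i0 x = cco w i0 y -> cco w i1 x = cco w i1 y -> cco w i2 x = cco w i2 y -> x = y.
Proof.
move=> b e0 e1 e2.
rewrite (coord_basis b (memvf x)) (coord_basis b (memvf y)).
rewrite !big_ord_recr !big_ord0 /=.
rewrite /cco in e0 e1 e2.
congr (_ + _ *: _ + _ *: _ + _ *: _).
- by have -> : widen_ord (leqnSn 2) (widen_ord (leqnSn 1) ord_max) = i0 :> 'I_3 by apply/val_inj.
- by have -> : widen_ord (leqnSn 2) ord_max = i1 :> 'I_3 by apply/val_inj.
- by have -> : ord_max = i2 :> 'I_3 by apply/val_inj.
Qed.

Lemma gactE (F : finFieldType) (L : fieldExtType F) (w : L) (g : 'M[F]_3) (a b : L) :
  Hgrp g ->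
  gact g (a, b) = ((g i0 i0)^-1 *: (g i0 i0 *: a + g i0 i1 *: b + (g i0 i2)%:A),
                   (g i0 i0)^-1 *: (g i1 i1 *: b + (g i1 i2)%:A)).
Proof.
move=> [h0 [h1 [h22 [h10 [h20 h21]]]]].
rewrite /gact /= h10 h20 h21 h22 !scale0r !add0r.
have inv : forall c : F, (c%:A : L)^-1 = (c^-1)%:A.
  move=> c; have [->|c0] := eqVneq c 0; first by rewrite invr0 scale0r invr0.
  apply: (mulfI (x := c%:A)); first by rewrite scaler_eq0 oner_eq0 orbF.
  rewrite mulfV ?scaler_eq0 ?oner_eq0 ?orbF //.
  by rewrite -scalerAl mul1r scalerA mulfV // scale1r.
by rewrite !inv !mulr_algr.
Qed.

Definition mkH {F : finFieldType} (G Y X C B : F) : 'M[F]_3 :=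
  \matrix_(i < 3, j < 3)
    match nat_of_ord i, nat_of_ord j with
    | 0, 0 => G | 0, 1 => Y | 0, 2 => X | 1, 1 => C | 1, 2 => B | 2, 2 => G
    | _, _ => 0 end.

Lemma mkH_H (F : finFieldType) (G Y X C B : F) :
  G != 0 -> C != 0 -> Hgrp (mkH G Y X C B).
Proof. by move=> g c; rewrite /Hgrp !mxE /=. Qed.

Lemma mkHE (F : finFieldType) (G Y X C B : F) :
  let g := mkH G Y X C B in
  [/\ g i0 i0 = G, g i0 i1 = Y, g i0 i2 = X, g i1 i1 = C & g i1 i2 = B].
Proof. by rewrite /= !mxE. Qed.

Unset Implicit Arguments. Set Strict Implicit.

Theorem proposition5p1 (F : finFieldType) (L : fieldExtType F)
    (delta : F) (w : L) :
  (#|F| %% 3 = 1)%N ->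
  cubic_nonresidue delta ->
  (\dim {:L} = 3)%N ->
  w ^+ 3 = delta%:A ->
  (forall p, ~ (D1 w p /\ D2 w p)) /\
  @fundamental_domain F L (@Hgrp F) (Hq w) (fun p => D1 w p \/ D2 w p).
Proof.
move=> _ nr d3 w3.
have fr := cbasis_free nr w3.
have bs := cbasis_basis fr d3.
have [[t01 [t11 t21]] [[t0w [t1w t2w]] [t02 [t12 t22]]]] := cco_tab fr.
have T := (t01, t11, t21, t0w, t1w, t2w, t02, t12, t22).
split.
  move=> p [[u [v [u0 ->]]] [u' [u0' []]]] _ /(congr1 (cco w i2)).
  rewrite ?(ccoD, ccoZ, ccoA, T) mulr0 add0r => /eqP; by rewrite oner_eq0.
split.
  move=> p [[u [v [u0 ->]]]|[u [u0 ->]]]; rewrite /Hq /= ?(ccoD, ccoZ, ccoA, T).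
    by rewrite !(mulr0, mul0r, mulr1, addr0, add0r, subr0).
  by rewrite !(mulr0, mul0r, mulr1, addr0, add0r, sub0r, oppr_eq0).
move=> [a b]; rewrite /Hq /= => hq.
have [hB2|hB2] := eqVneq (cco w i2 b) 0.
- move: hq; rewrite hB2 mulr0 sub0r oppr_eq0 mulf_eq0 negb_or => /andP[hA2 hB1].
  exists (w + cco w i2 a *: w ^+ 2, w).
  split.
    split; first by right; eexists; split; last reflexivity.
    exists (mkH 1 ((1 - cco w i1 a) / cco w i1 b)
               (- (cco w i0 a + ((1 - cco w i1 a) / cco w i1 b) * cco w i0 b))
               (cco w i1 b)^-1 (- cco w i0 b / cco w i1 b)).
    have hg := mkH_H ((1 - cco w i1 a) / cco w i1 b)
               (- (cco w i0 a + ((1 - cco w i1 a) / cco w i1 b) * cco w i0 b))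
               (- cco w i0 b / cco w i1 b) (oner_neq0 F) (invr_neq0 hB1).
    split => //; rewrite gactE // !mxE /=.
    congr (_, _); apply: (cco_eq bs); rewrite ?(ccoD, ccoZ, ccoA, T) ?hB2; field; by rewrite ?hB1 ?oner_neq0.
  move=> d' [[u [v [u0 ->]]]|[u [u0 ->]]] [g [hg]]; rewrite gactE //; case=> e1 e2;
    have [G0 [C0 _]] := hg;
    have f2 := congr1 (cco w i2) e1;
    have s2 := congr1 (cco w i2) e2;
    move: f2 s2; rewrite ?(ccoD, ccoZ, ccoA, T) hB2 !(mulr0, mul0r, mulr1, addr0, add0r).
    by move=> _ /eqP; rewrite eq_sym oner_eq0.
  move=> f2 _; rewrite -f2 mulKf //.
- exists (((cco w i1 a * cco w i2 b - cco w i2 a * cco w i1 b) / cco w i2 b) *: w,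
          (cco w i1 b / cco w i2 b) *: w + w ^+ 2).
  split.
    split; first by left; do 2 eexists; split; last reflexivity; rewrite mulf_neq0 ?invr_eq0.
    exists (mkH 1 (- cco w i2 a / cco w i2 b)
               (- (cco w i0 a + (- cco w i2 a / cco w i2 b) * cco w i0 b))
               (cco w i2 b)^-1 (- cco w i0 b / cco w i2 b)).
    have hg := mkH_H (- cco w i2 a / cco w i2 b)
               (- (cco w i0 a + (- cco w i2 a / cco w i2 b) * cco w i0 b))
               (- cco w i0 b / cco w i2 b) (oner_neq0 F) (invr_neq0 hB2).
    split => //; rewrite gactE // !mxE /=.
    congr (_, _); apply: (cco_eq bs); rewrite ?(ccoD, ccoZ, ccoA, T); field; by rewrite ?hB2 ?oner_neq0.
  move=> d' [[u [v [u0 ->]]]|[u [u0 ->]]] [g [hg]]; rewrite gactE //; case=> e1 e2;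
    have [G0 [C0 _]] := hg;
    have f1 := congr1 (cco w i1) e1; have f2 := congr1 (cco w i2) e1;
    have s1 := congr1 (cco w i1) e2; have s2 := congr1 (cco w i2) e2;
    move: f1 f2 s1 s2; rewrite ?(ccoD, ccoZ, ccoA, T) !(mulr0, mul0r, mulr1, addr0, add0r).
    move=> f1 f2 s1 s2.
    have hY : g i0 i1 = - (g i0 i0 * cco w i2 a) / cco w i2 b.
      move/eqP: f2; rewrite mulf_eq0 invr_eq0 (negbTE G0) /= addr_eq0 => /eqP h.
      by rewrite h opprK mulfK.
    have hC : g i1 i1 = g i0 i0 / cco w i2 b.
      have h : g i1 i1 * cco w i2 b = g i0 i0 by rewrite -[RHS]mulr1 -s2 mulVKf.
      by rewrite -h mulfK.
    rewrite -f1 -s1 hY hC; congr (_ *: _, _ *: _ + _); field; by rewrite ?hB2 ?G0.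
  move=> _ _ _ /eqP; by rewrite !mulf_eq0 invr_eq0 (negbTE G0) (negbTE C0) (negbTE hB2).
Qed.
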